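(* Let $G=(V,E)$ be a finite simple connected graph, and let $T(G)$ be the largest $t$ such that $G$ contains a $t$-tuplet. Then $IDI(G)\ge T(G)$.
   Context: For a graph $G=(V,E)$, a set $S\subseteq V$ with $|S|=t\ge 2$ is a $t$-tuplet if either $S$ is an independent set and any two vertices of $S$ have the same (open) neighborhood, or $S$ is a clique and any two vertices of $S$ have the same closed neighborhood $N(v)\cup\{v\}$. For $G$ with diameter $d$, a rank assignment is a function $f:V\to\mathbb{R}$; under $f$, the string of a vertex $v$ is the $d$-vector whose $i$-th coordinate is the sum of $f(w)$ over all vertices $w$ with $d(v,w)=i$. The ID-index $IDI(G)$ is the minimum $k$ such that there exists $f:V\to\mathbb{R}$ with $|f(V)|=k$ under which all vertices have distinct strings. *)

(* Defs.v *)
From HB Require Import structures.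
From mathcomp Require Import all_boot all_order all_algebra.
From mathcomp Require Import reals.
Set Implicit Arguments. Unset Strict Implicit. Unset Printing Implicit Defensive.
Import Order.TTheory GRing.Theory Num.Theory.

Section Graphs.
Variable V : finType.
Variable e : rel V.

Definition simple_graph := symmetric e /\ irreflexive e.
Definition connected_graph := forall u v : V, connect e u v.

Fixpoint walkn (n : nat) (u v : V) : bool :=
  match n with
  | 0 => u == v
  | n'.+1 => [exists w, e u w && walkn n' w v]
  end.

(* graph distance: least n with a walk of length n (shortest walks have
   fewer than #|V| edges in a connected graph; default #|V| otherwise) *)
Definition dist (u v : V) : nat :=
  \big[minn/#|V|]_(n < #|V| | walkn n u v) (n : nat).

Definition diameter : nat := \max_(u : V) \max_(v : V) dist u v.

(* string of v under f: coordinate i (0-indexed, standing for distance i+1)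
   is the sum of f w over vertices w at distance i+1 from v *)
Definition vstring (R : realType) (f : V -> R) (v : V) : 'rV[R]_diameter :=
  \row_(i < diameter) (\sum_(w : V | dist v w == i.+1) f w)%R.

Definition num_ranks (R : realType) (f : V -> R) : nat :=
  size (undup [seq f x | x <- enum V]).

Definition is_IDI (R : realType) (k : nat) : Prop :=
  (exists f : V -> R, injective (vstring f) /\ num_ranks f = k) /\
  (forall f : V -> R, injective (vstring f) -> k <= num_ranks f).

Definition tuplet (S : {set V}) : bool :=
  (2 <= #|S|) &&
  ( ([forall x in S, forall y in S, ~~ e x y] &&
     [forall x in S, forall y in S, forall z, e x z == e y z])
  || ([forall x in S, forall y in S, (x != y) ==> e x y] &&
      [forall x in S, forall y in S, forall z,
          (e x z || (z == x)) == (e y z || (z == y))]) ).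

(* T(G): largest size of a tuplet (0 if there is none) *)
Definition T_index : nat := \max_(S : {set V} | tuplet S) #|S|.

End Graphs.

(* Main.v *)
Require Import Defs.
From HB Require Import structures.
From mathcomp Require Import all_boot all_order all_algebra.
From mathcomp Require Import reals.
Set Implicit Arguments. Unset Strict Implicit.

Section Aux.
Variable V : finType.
Variable e : rel V.

Lemma walknS n u v :
  walkn e n.+1 u v = [exists w, e u w && walkn e n w v].
Proof. by []. Qed.

Lemma walknSr n u v :
  walkn e n.+1 u v = [exists w, walkn e n u w && e w v].
Proof.
elim: n u => [|n IH] u.
  rewrite /=; apply/existsP/existsP => [[w /andP[euw /eqP <-]]|[w /andP[/eqP <- ewv]]].
    by exists u; rewrite eqxx euw.
  by exists v; rewrite eqxx ewv.
rewrite walknS; apply/existsP/existsP.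
  move=> [w /andP[euw]]; rewrite IH => /existsP[w' /andP[h1 h2]].
  exists w'; rewrite h2 andbT; apply/existsP; exists w; by rewrite euw.
move=> [w' /andP[/existsP[w /andP[euw h1]] h2]].
exists w; rewrite euw IH; apply/existsP; exists w'; apply/andP; split; [exact: h1 | exact: h2].
Qed.

Lemma walkn_sym n u v : symmetric e -> walkn e n u v = walkn e n v u.
Proof.
move=> se; elim: n u v => [|n IH] u v; first by rewrite /= eq_sym.
rewrite walknS walknSr; apply/existsP/existsP => [[w /andP[h1 h2]]|[w /andP[h1 h2]]];
  exists w; rewrite se; apply/andP; split => //; rewrite IH //.
Qed.

Lemma dist_le u v m : m < #|V| -> walkn e m u v -> dist e u v <= m.
Proof.
move=> mV hw; rewrite /dist.
have : forall s : seq 'I_#|V|, Ordinal mV \in s ->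
  \big[minn/#|V|]_(n <- s | walkn e n u v) (n : nat) <= m.
  elim=> [//|a s IHs]; rewrite inE big_cons => /orP[/eqP <-|hs].
    by rewrite hw /= geq_minl.
  case: ifP => _; last exact: IHs.
  by rewrite geq_min IHs ?orbT.
by move/(_ (index_enum _)); rewrite mem_index_enum; apply.
Qed.

Lemma dist_cases u v : dist e u v = #|V| \/ walkn e (dist e u v) u v.
Proof.
rewrite /dist; apply: (big_ind (fun x => x = #|V| \/ walkn e x u v)).
- by left.
- by move=> a b ha hb; rewrite /minn; case: ifP.
- by move=> i hi; right.
Qed.

Lemma dist_leV u v : dist e u v <= #|V|.
Proof.
rewrite /dist; apply: (big_ind (fun x => x <= #|V|)) => //.
- by move=> a b ha hb; rewrite geq_min ha.
- by move=> i _; apply: ltnW.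
Qed.

Lemma dist_sym u v : symmetric e -> dist e u v = dist e v u.
Proof.
move=> se; rewrite /dist; apply: eq_bigl => n; exact: walkn_sym.
Qed.

Definition twins (x y : V) :=
  (forall z, e x z = e y z) \/
  (forall z, (e x z || (z == x)) = (e y z || (z == y))).

Lemma twins_sym x y : twins x y -> twins y x.
Proof. by case=> h; [left|right] => z; rewrite h. Qed.

Lemma twin_reach x y w n : twins x y -> w != y -> walkn e n y w ->
  exists2 m, m <= n & walkn e m x w.
Proof.
move=> tw wy; case: n => [/= /eqP yw|n]; first by rewrite yw eqxx in wy.
move=> /= /existsP[z /andP[eyz hz]].
case: tw => h.
  exists n.+1 => //=; apply/existsP; exists z; by rewrite h eyz.
have := h z; rewrite eyz /= => /orP[exz|/eqP zx].
  exists n.+1 => //=; apply/existsP; exists z; by rewrite exz.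
by exists n => //; rewrite -zx.
Qed.

Lemma twin_dist_le x y w : twins x y -> w != y -> dist e x w <= dist e y w.
Proof.
move=> tw wy; case: (dist_cases y w) => [->|hw]; first exact: dist_leV.
have [m hm hx] := @twin_reach x y w _ tw wy hw.
case: (eqVneq (dist e y w) #|V|) => [->|ne]; first exact: dist_leV.
have dV : dist e y w < #|V| by rewrite ltn_neqAle ne dist_leV.
exact: leq_trans (@dist_le x w m (leq_ltn_trans hm dV) hx) hm.
Qed.

End Aux.

Import GRing.Theory.

Section Aux2.
Variable V : finType.
Variable e : rel V.

Lemma twin_dist x y w : twins e x y -> w != x -> w != y ->
  dist e x w = dist e y w.
Proof.
move=> tw wx wy; apply/eqP; rewrite eqn_leq twin_dist_le //.
exact: (twin_dist_le (twins_sym tw) wx).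
Qed.

Lemma dist_self u : dist e u u = 0.
Proof.
apply/eqP; rewrite -leqn0; apply: dist_le => //=.
by apply/card_gt0P; exists u.
Qed.

Lemma vstring_eq (R : realType) (f : V -> R) x y :
  symmetric e -> twins e x y -> f x = f y -> vstring e f x = vstring e f y.
Proof.
move=> se tw fxy; apply/rowP => i; rewrite !mxE.
pose h w := if w == x then y else if w == y then x else w.
have hK : involutive h.
  move=> w; rewrite /h; case: (eqVneq w x) => [->|wx].
    rewrite eqxx; case: (eqVneq y x) => [->|yx]; by rewrite ?eqxx ?(negbTE yx).
  case: (eqVneq w y) => [->|wy]; first by rewrite eqxx.
  by rewrite (negbTE wx) (negbTE wy).
rewrite (reindex_inj (inv_inj hK)); apply: eq_big => [j|j _]; rewrite /h.
- case: (eqVneq j x) => [->|jx]; first by rewrite dist_sym.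
  case: (eqVneq j y) => [->|jy]; first by rewrite !dist_self.
  by rewrite (twin_dist tw jx jy).
- case: (eqVneq j x) => [->|jx] //.
  by case: (eqVneq j y) => [->|jy].
Qed.

Lemma tuplet_twins (S : {set V}) x y : tuplet e S -> x \in S -> y \in S ->
  twins e x y.
Proof.
case/andP=> _ /orP[/andP[_ /forallP B]|/andP[_ /forallP D]] xS yS.
  left=> z; move: (B x); rewrite xS /= => /forallP /(_ y).
  by rewrite yS /= => /forallP /(_ z) /eqP.
right=> z; move: (D x); rewrite xS /= => /forallP /(_ y).
by rewrite yS /= => /forallP /(_ z) /eqP.
Qed.

End Aux2.

Theorem mainTheorem3 (R : realType) (V : finType) (e : rel V) :
  simple_graph e -> connected_graph e ->
  forall k : nat, is_IDI e R k -> T_index e <= k.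
Proof.
move=> [se ir] _ k [[f [finj <-]] _].
apply/bigmax_leqP => S tS.
have injS : {in S &, injective f}.
  move=> x y xS yS fxy; apply: finj; apply: vstring_eq => //.
  exact: tuplet_twins tS xS yS.
rewrite /num_ranks cardE -(size_map f); apply: uniq_leq_size.
  by rewrite map_inj_in_uniq ?enum_uniq // => a b; rewrite !mem_enum; exact: injS.
move=> z /mapP[a _ ->]; rewrite mem_undup; apply/mapP; exists a => //.
by rewrite mem_enum.
Qed.
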